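(* For $K=K(\delta)>0$, $L=L(\delta)>0$, define on the uniform one-dimensional grid of spacing $h$ the finite difference scheme \[ -F^{1D,e,\delta}[u]=A^{\delta,+}\left(\lvert u_x^h\rvert^+,-u_{xx}^h\right)+A^{\delta,-}\left(-\lvert u_x^h\rvert^-,-u_{xx}^h\right). \] Then $-F^{1D,e,\delta}$ is elliptic and consistent with $-F^{1D,\delta}$, where $F^{1D,\delta}[u]=A^\delta(u_x,u_{xx})$.
   Context: $A(p,q)=(p^2q)^{1/3}$ (real cube root); $A^\delta(p,q)=\operatorname{sgn}(q)\min(\lvert A(p,q)\rvert,K\lvert p\rvert,L\lvert q\rvert)$ with $\operatorname{sgn}(0)=0$; $A^{\delta,+}(p,q)=A^\delta(p^+,q^+)$, $A^{\delta,-}(p,q)=A^\delta(p^-,q^-)$ with $x^+=\max(x,0)$, $x^-=\min(x,0)$. For a grid function $u$: $D^-_xu(x)=\frac{u(x)-u(x-h)}h$, $-D^+_xu(x)=\frac{u(x)-u(x+h)}h$, $\lvert u_x^h\rvert^+=\max\{-D^+_xu,D^-_xu,0\}$, $-\lvert u_x^h\rvert^-=\min\{-D^+_xu,D^-_xu,0\}$, $u_{xx}^h(x)=\frac{u(x+h)-2u(x)+u(x-h)}{h^2}$. A finite difference operator $F^h[u](x)=F^h(x,u(x),u(x)-u(\cdot))$ is elliptic if $r\le s$, $v(\cdot)\le w(\cdot)$ imply $F^h(x,r,v(\cdot))\le F^h(x,s,w(\cdot))$; it is consistent with $F$ if $\lim_{h\to0,\,y\to x}F^h[\phi](y)=F[\phi](x)$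 for every smooth $\phi$. *)

(* Defs.v *)
From Stdlib Require Import Reals Lra.
From Coquelicot Require Import Coquelicot.
Open Scope R_scope.

Definition sgn (x : R) : R :=
  if Rlt_dec 0 x then 1 else if Rlt_dec x 0 then -1 else 0.

Definition cbrt (x : R) : R :=
  if Rlt_dec 0 x then Rpower x (1/3)
  else if Rlt_dec x 0 then - Rpower (- x) (1/3) else 0.

Definition pos (x : R) : R := Rmax x 0.
Definition neg (x : R) : R := Rmin x 0.

Definition A (p q : R) : R := cbrt (p ^ 2 * q).

Definition Adelta (K L p q : R) : R :=
  sgn q * Rmin (Rmin (Rabs (A p q)) (K * Rabs p)) (L * Rabs q).

Definition Adelta_plus (K L p q : R) : R := Adelta K L (pos p) (pos q).
Definition Adelta_minus (K L p q : R) : R := Adelta K L (neg p) (neg q).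

Definition Dminus (h : R) (u : R -> R) (x : R) : R := (u x - u (x - h)) / h.
Definition mDplus (h : R) (u : R -> R) (x : R) : R := (u x - u (x + h)) / h.
Definition abs_ux_plus (h : R) (u : R -> R) (x : R) : R :=
  Rmax (Rmax (mDplus h u x) (Dminus h u x)) 0.
(* m_abs_ux_minus = -|u_x^h|^- *)
Definition m_abs_ux_minus (h : R) (u : R -> R) (x : R) : R :=
  Rmin (Rmin (mDplus h u x) (Dminus h u x)) 0.
Definition uxx (h : R) (u : R -> R) (x : R) : R :=
  (u (x + h) - 2 * u x + u (x - h)) / h ^ 2.

Definition negFe (K L h : R) (u : R -> R) (x : R) : R :=
  Adelta_plus K L (abs_ux_plus h u x) (- uxx h u x)
  + Adelta_minus K L (m_abs_ux_minus h u x) (- uxx h u x).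

(* the scheme written as F^h(x, r, v(.)) where r = u(x), v = u(x) - u(.):
   the grid function with u(x) = r and u(y) = r - v(y) for y <> x. *)
Definition negFe_rv (K L h x r : R) (v : R -> R) : R :=
  negFe K L h (fun y => if Req_EM_T y x then r else r - v y) x.

Definition elliptic_scheme (Fh : R -> R -> R -> (R -> R) -> R) : Prop :=
  forall (h x r s : R) (v w : R -> R), 0 < h ->
    r <= s -> (forall k : Z, v (x + IZR k * h) <= w (x + IZR k * h)) ->
    Fh h x r v <= Fh h x s w.

Definition smooth (phi : R -> R) : Prop := forall (n : nat) (y : R), ex_derive_n phi n y.

Definition consistent (Fh : R -> (R -> R) -> R -> R) (F : (R -> R) -> R -> R) : Prop :=
  forall (phi : R -> R) (x : R), smooth phi ->
    filterlim (fun hy : R * R => Fh (fst hy) phi (snd hy))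
      (filter_prod (at_right 0) (locally x)) (locally (F phi x)).

Definition F1D (K L : R) (u : R -> R) (x : R) : R :=
  Adelta K L (Derive u x) (Derive_n u 2 x).

(* Main.v *)
Require Import Defs.
From Stdlib Require Import Reals Lra Psatz.
From Coquelicot Require Import Coquelicot.
Require Import Defs.
Open Scope R_scope.

Lemma cube_lt s t : s < t -> s ^ 3 < t ^ 3.
Proof. intros H.
  assert (Hp : 0 < (t + s/2)^2 + 3/4 * s^2).
  { destruct (Req_dec s 0). subst. nra. assert (0 < s^2) by (apply pow2_gt_0; auto). nra. }
  assert (0 < (t - s) * ((t + s/2)^2 + 3/4 * s^2)) by (apply Rmult_lt_0_compat; lra).
  replace (t^3) with (s^3 + (t - s) * ((t + s/2)^2 + 3/4 * s^2)) by field. lra. Qed.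
Lemma cube_le s t : s <= t -> s ^ 3 <= t ^ 3.
Proof. intros H. destruct (Req_dec s t). subst; apply Rle_refl. apply Rlt_le, cube_lt; lra. Qed.

Lemma cbrt_cube x : cbrt x ^ 3 = x.
Proof.
  unfold cbrt.
  assert (K : forall y, 0 < y -> Rpower y (1/3) ^ 3 = y).
  { intros y Hy. rewrite <- Rpower_pow by (unfold Rpower; apply exp_pos).
    rewrite Rpower_mult. replace (1/3 * INR 3) with 1 by (simpl; field).
    apply Rpower_1; auto. }
  destruct (Rlt_dec 0 x). apply K; auto.
  destruct (Rlt_dec x 0). replace ((- Rpower (- x) (1 / 3)) ^ 3) with (- (Rpower (- x) (1 / 3) ^ 3)) by ring.
  rewrite K; lra. simpl; lra.
Qed.

Lemma cbrt_mono x y : x <= y -> cbrt x <= cbrt y.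
Proof.
  intros H. destruct (Rle_dec (cbrt x) (cbrt y)); auto.
  exfalso. assert (cbrt y ^ 3 < cbrt x ^ 3) by (apply cube_lt; lra).
  rewrite !cbrt_cube in H0; lra.
Qed.

Lemma cbrt_unique x t : t ^ 3 = x -> cbrt x = t.
Proof.
  intros H. destruct (Rtotal_order (cbrt x) t) as [h|[h|h]]; auto;
  [apply cube_lt in h | apply cube_lt in h]; rewrite cbrt_cube in h; lra.
Qed.

Lemma cbrt_opp x : cbrt (- x) = - cbrt x.
Proof. apply cbrt_unique. replace ((- cbrt x) ^ 3) with (- (cbrt x ^ 3)) by ring. rewrite cbrt_cube; auto. Qed.

Lemma cbrt_0 : cbrt 0 = 0.
Proof. apply cbrt_unique; ring. Qed.

Lemma cbrt_cont x : filterlim cbrt (locally x) (locally (cbrt x)).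
Proof.
  apply filterlim_locally. intros eps.
  set (a := cbrt x).
  assert (H1 : (a - eps) ^ 3 < x). { rewrite <- (cbrt_cube x). apply cube_lt. destruct eps; simpl; unfold a; lra. }
  assert (H2 : x < (a + eps) ^ 3). { rewrite <- (cbrt_cube x). apply cube_lt. destruct eps; simpl; unfold a; lra. }
  assert (Hd : 0 < Rmin (x - (a - eps) ^ 3) ((a + eps) ^ 3 - x)) by (apply Rmin_pos; lra).
  exists (mkposreal _ Hd). intros y Hy.
  change (Rabs (y - x) < Rmin (x - (a - eps) ^ 3) ((a + eps) ^ 3 - x)) in Hy.
  change (Rabs (cbrt y - a) < eps).
  apply Rabs_def2 in Hy. destruct Hy as [Hy1 Hy2].
  pose proof (Rmin_l (x - (a - eps) ^ 3) ((a + eps) ^ 3 - x)).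
  pose proof (Rmin_r (x - (a - eps) ^ 3) ((a + eps) ^ 3 - x)).
  apply Rabs_def1.
  - destruct (Rlt_dec (cbrt y) (a + eps)). lra. exfalso.
    assert ((a+eps)^3 <= cbrt y ^ 3) by (apply cube_le; lra). rewrite cbrt_cube in H3; lra.
  - destruct (Rlt_dec (a - eps) (cbrt y)). lra. exfalso.
    assert (cbrt y ^ 3 <= (a - eps)^3) by (apply cube_le; lra). rewrite cbrt_cube in H3; lra.
Qed.

Section Lims.
Context {T : Type} {F : (T -> Prop) -> Prop} {FF : Filter F}.

Lemma lim_lip2 (f g h : T -> R) (a b c : R) :
  filterlim f F (locally a) -> filterlim g F (locally b) ->
  (forall t, Rabs (h t - c) <= Rabs (f t - a) + Rabs (g t - b)) ->
  filterlim h F (locally c).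
Proof.
  intros Hf Hg Hh. apply filterlim_locally. intros eps.
  assert (He : 0 < eps / 2) by (destruct eps; simpl; lra).
  pose proof (proj1 (filterlim_locally _ _) Hf (mkposreal _ He)) as A1.
  pose proof (proj1 (filterlim_locally _ _) Hg (mkposreal _ He)) as A2.
  generalize (filter_and _ _ A1 A2). apply filter_imp. intros t [B1 B2].
  change (Rabs (f t - a) < eps/2) in B1. change (Rabs (g t - b) < eps/2) in B2.
  change (Rabs (h t - c) < eps). specialize (Hh t). lra.
Qed.

Lemma lim_const (a : R) : filterlim (fun _ : T => a) F (locally a).
Proof. apply filterlim_const. Qed.

Lemma lim_lip1 (f h : T -> R) (a c : R) :
  filterlim f F (locally a) ->
  (forall t, Rabs (h t - c) <= Rabs (f t - a)) ->
  filterlim h F (locally c).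
Proof.
  intros Hf Hh. apply (lim_lip2 f (fun _ => 0) h a 0 c Hf (lim_const 0)).
  intros t. rewrite Rminus_0_r, Rabs_R0. specialize (Hh t); lra.
Qed.

Lemma lim_mult (f g : T -> R) (a b : R) :
  filterlim f F (locally a) -> filterlim g F (locally b) ->
  filterlim (fun t => f t * g t) F (locally (a * b)).
Proof.
  intros Hf Hg. apply (filterlim_comp_2 f g Rmult Hf Hg).
  apply (@filterlim_mult R_AbsRing a b).
Qed.

Lemma lim_cbrt (f : T -> R) (a : R) :
  filterlim f F (locally a) -> filterlim (fun t => cbrt (f t)) F (locally (cbrt a)).
Proof. intros Hf. eapply filterlim_comp. apply Hf. apply cbrt_cont. Qed.

Lemma lim_ext (f g : T -> R) (a : R) : (forall t, f t = g t) -> filterlim f F (locally a) -> filterlim g F (locally a).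
Proof. intros H. apply filterlim_ext. auto. Qed.

End Lims.

Lemma Rabs_max_lip a b c d : Rabs (Rmax a b - Rmax c d) <= Rabs (a - c) + Rabs (b - d).
Proof. unfold Rmax; destruct (Rle_dec a b), (Rle_dec c d); unfold Rabs; repeat destruct Rcase_abs; lra. Qed.
Lemma Rabs_min_lip a b c d : Rabs (Rmin a b - Rmin c d) <= Rabs (a - c) + Rabs (b - d).
Proof. unfold Rmin; destruct (Rle_dec a b), (Rle_dec c d); unfold Rabs; repeat destruct Rcase_abs; lra. Qed.
Lemma Rabs_abs_lip a c : Rabs (Rabs a - Rabs c) <= Rabs (a - c).
Proof. unfold Rabs; repeat destruct Rcase_abs; lra. Qed.

Lemma sgn_abs q : Rabs (sgn q) <= 1.
Proof. unfold sgn; repeat destruct Rlt_dec; unfold Rabs; repeat destruct Rcase_abs; lra. Qed.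


Definition M K L p q := Rmin (Rmin (Rabs (A p q)) (K * Rabs p)) (L * Rabs q).

Lemma M_bounds K L p q : 0 < K -> 0 < L -> 0 <= M K L p q <= L * Rabs q.
Proof.
  intros HK HL. unfold M. split. 2: apply Rmin_r.
  pose proof (Rabs_pos (A p q)). pose proof (Rabs_pos p). pose proof (Rabs_pos q).
  unfold Rmin; repeat destruct Rle_dec; nra.
Qed.

Lemma Adelta_bound K L p q : 0 < K -> 0 < L -> Rabs (Adelta K L p q) <= L * Rabs q.
Proof.
  intros HK HL. unfold Adelta. rewrite Rabs_mult.
  fold (M K L p q). pose proof (M_bounds K L p q HK HL). pose proof (sgn_abs q).
  rewrite (Rabs_right (M K L p q)) by lra. pose proof (Rabs_pos (sgn q)). nra.
Qed.

Lemma lim_M {T} {F : (T -> Prop) -> Prop} {FF : Filter F} K L (f g : T -> R) (a b : R) :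
  0 < K -> 0 < L -> filterlim f F (locally a) -> filterlim g F (locally b) ->
  filterlim (fun t => M K L (f t) (g t)) F (locally (M K L a b)).
Proof.
  intros HK HL Hf Hg. unfold M.
  apply (lim_lip2 (fun t => Rmin (Rabs (A (f t) (g t))) (K * Rabs (f t))) (fun t => L * Rabs (g t)) _ (Rmin (Rabs (A a b)) (K * Rabs a)) (L * Rabs b)); [| |intros; apply Rabs_min_lip].
  - apply (lim_lip2 (fun t => A (f t) (g t)) (fun t => K * f t) _ (A a b) (K * a)); [| |].
    + unfold A. apply lim_cbrt. 
      replace (a ^ 2 * b) with ((a * a) * b) by ring. apply (lim_ext (fun t => (f t * f t) * g t)). intros; ring. apply lim_mult; auto. apply lim_mult; auto.
    + apply lim_mult; auto. apply lim_const.
    + intros t. eapply Rle_trans. apply Rabs_min_lip. apply Rplus_le_compat. apply Rabs_abs_lip.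
      replace (K * Rabs (f t) - K * Rabs a) with (Rabs (K * f t) - Rabs (K * a)).
      apply Rabs_abs_lip. rewrite !Rabs_mult, (Rabs_right K) by lra. ring.
  - apply (lim_lip1 (fun t => L * g t) _ (L * b)). apply lim_mult; auto. apply lim_const.
    intros t. replace (L * Rabs (g t) - L * Rabs b) with (Rabs (L * g t) - Rabs (L * b)).
    apply Rabs_abs_lip. rewrite !Rabs_mult, (Rabs_right L) by lra. ring.
Qed.

Lemma Adelta_M K L p q : Adelta K L p q = sgn q * M K L p q.
Proof. reflexivity. Qed.

Lemma sgn_0 : sgn 0 = 0.
Proof. unfold sgn. destruct (Rlt_dec 0 0). lra. destruct (Rlt_dec 0 0). lra. reflexivity. Qed.
Lemma Adelta_q0 K L p : Adelta K L p 0 = 0.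
Proof. rewrite Adelta_M, sgn_0. ring. Qed.

Lemma lim_Adelta {T} {F : (T -> Prop) -> Prop} {FF : Filter F} K L (f g : T -> R) (a b : R) :
  0 < K -> 0 < L -> filterlim f F (locally a) -> filterlim g F (locally b) ->
  filterlim (fun t => Adelta K L (f t) (g t)) F (locally (Adelta K L a b)).
Proof.
  intros HK HL Hf Hg.
  pose proof (lim_M K L f g a b HK HL Hf Hg) as HM.
  destruct (Rtotal_order b 0) as [Hb|[Hb|Hb]].
  - assert (Hs : F (fun t => - M K L (f t) (g t) = Adelta K L (f t) (g t))).
    { assert (He : 0 < - b) by lra.
      generalize (proj1 (filterlim_locally _ _) Hg (mkposreal _ He)). apply filter_imp.
      intros t Ht. change (Rabs (g t - b) < - b) in Ht. apply Rabs_def2 in Ht.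
      rewrite Adelta_M. unfold sgn. destruct Rlt_dec. lra. destruct Rlt_dec. ring. lra. }
    eapply filterlim_ext_loc. apply Hs.
    replace (Adelta K L a b) with (- M K L a b).
    apply (lim_lip1 (fun t => M K L (f t) (g t)) _ (M K L a b) _ HM).
    intros t. replace (- M K L (f t) (g t) - - M K L a b) with (- (M K L (f t) (g t) - M K L a b)) by ring.
    rewrite Rabs_Ropp; lra.
    rewrite Adelta_M. unfold sgn. destruct Rlt_dec. lra. destruct Rlt_dec. ring. lra.
  - subst b.
    rewrite Adelta_q0.
    apply (lim_lip1 (fun t => L * g t) _ (L * 0)). apply lim_mult; auto. apply lim_const.
    intros t. rewrite Rminus_0_r. replace (L * g t - L * 0) with (L * g t) by ring.
    rewrite Rabs_mult, (Rabs_right L) by lra. apply Adelta_bound; auto.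
  - assert (Hs : F (fun t => M K L (f t) (g t) = Adelta K L (f t) (g t))).
    { generalize (proj1 (filterlim_locally _ _) Hg (mkposreal _ Hb)). apply filter_imp.
      intros t Ht. change (Rabs (g t - b) < b) in Ht. apply Rabs_def2 in Ht.
      rewrite Adelta_M. unfold sgn. destruct Rlt_dec. ring. lra. }
    eapply filterlim_ext_loc. apply Hs.
    replace (Adelta K L a b) with (M K L a b). exact HM.
    rewrite Adelta_M. unfold sgn. destruct Rlt_dec. ring. lra.
Qed.

Lemma lim_mvt (g : R -> R) x (v : R -> R -> R) :
  continuous g x ->
  (forall h y, 0 < h -> exists c, Rabs (c - y) <= h /\ v h y = g c) ->
  filterlim (fun hy : R * R => v (fst hy) (snd hy)) (filter_prod (at_right 0) (locally x)) (locally (g x)).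
Proof.
  intros Hg Hv. apply filterlim_locally. intros eps.
  destruct (proj1 (filterlim_locally _ _) Hg eps) as [d Hd].
  assert (Hd2 : 0 < d / 2) by (destruct d; simpl; lra).
  apply (Filter_prod _ _ _ (fun h => 0 < h < d / 2) (fun y => Rabs (y - x) < d / 2)).
  - exists (mkposreal _ Hd2). intros h Hh Hp. change (Rabs (h - 0) < d / 2) in Hh.
    apply Rabs_def2 in Hh. simpl. lra.
  - exists (mkposreal _ Hd2). intros y Hy. exact Hy.
  - intros h y [Hh1 Hh2] Hy. simpl.
    destruct (Hv h y Hh1) as [c [Hc Hvc]]. rewrite Hvc. apply Hd.
    change (Rabs (c - x) < d).
    replace (c - x) with ((c - y) + (y - x)) by ring.
    eapply Rle_lt_trans. apply Rabs_triang. lra.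
Qed.

Lemma cont_pt_of_ex (f : R -> R) y : ex_derive f y -> continuity_pt f y.
Proof. intros H. apply continuity_pt_filterlim. exact (@ex_derive_continuous R_AbsRing R_NormedModule f y H). Qed.

Lemma cont_of_ex (f : R -> R) (y : R) : ex_derive f y -> continuous f y.
Proof. intros H. exact (@ex_derive_continuous R_AbsRing R_NormedModule f y H). Qed.

Section Sm.
Variable phi : R -> R.
Hypothesis Hs : smooth phi.

Lemma d0 y : ex_derive phi y.
Proof. exact (Hs 1%nat y). Qed.
Lemma d1 y : ex_derive (Derive phi) y.
Proof. exact (Hs 2%nat y). Qed.
Lemma d2 y : ex_derive (Derive (Derive phi)) y.
Proof. exact (Hs 3%nat y). Qed.

Lemma mvt_phi a b : a < b -> exists c, a <= c <= b /\ phi b - phi a = Derive phi c * (b - a).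
Proof.
  intros Hab. destruct (MVT_gen phi a b (Derive phi)) as [c [Hc E]].
  - intros; apply Derive_correct, d0.
  - intros; apply cont_pt_of_ex, d0.
  - exists c. rewrite Rmin_left, Rmax_right in Hc by lra. auto.
Qed.

Lemma lim_Dminus (x : R) : filterlim (fun hy : R * R => Dminus (fst hy) phi (snd hy))
   (filter_prod (at_right 0) (locally x)) (locally (Derive phi x)).
Proof.
  apply (lim_mvt (Derive phi) x (fun h y => Dminus h phi y)).
  apply cont_of_ex, d1.
  intros h y Hh. destruct (mvt_phi (y - h) y) as [c [Hc E]]. lra.
  exists c. split. apply Rabs_le; lra.
  unfold Dminus. rewrite E. field. lra.
Qed.

Lemma lim_mDplus (x : R) : filterlim (fun hy : R * R => mDplus (fst hy) phi (snd hy))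
   (filter_prod (at_right 0) (locally x)) (locally (- Derive phi x)).
Proof.
  apply (lim_mvt (fun c => - Derive phi c) x (fun h y => mDplus h phi y)).
  apply (continuous_opp (Derive phi)), ex_derive_continuous, d1.
  intros h y Hh. destruct (mvt_phi y (y + h)) as [c [Hc E]]. lra.
  exists c. split. apply Rabs_le; lra.
  unfold mDplus. replace (phi y - phi (y + h)) with (- (phi (y + h) - phi y)) by ring.
  rewrite E. field. lra.
Qed.

Lemma psi_der h s : is_derive (fun s => phi (s + h) - phi s) s (Derive phi (s + h) - Derive phi s).
Proof.
  apply (is_derive_minus (fun s => phi (s + h)) phi).
  - assert (E : scal (1:R) (Derive phi (s+h)) = Derive phi (s+h)) by (unfold scal; simpl; unfold mult; simpl; ring).
    rewrite <- E. apply (is_derive_comp phi (fun s => s + h)). apply Derive_correct, d0.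
    auto_derive. auto. reflexivity.
  - apply Derive_correct, d0.
Qed.

Lemma lim_muxx (x : R) : filterlim (fun hy : R * R => - uxx (fst hy) phi (snd hy))
   (filter_prod (at_right 0) (locally x)) (locally (- Derive_n phi 2 x)).
Proof.
  apply (lim_mvt (fun c => - Derive (Derive phi) c) x (fun h y => - uxx h phi y)).
  apply (continuous_opp (Derive (Derive phi))), ex_derive_continuous, d2.
  intros h y Hh.
  set (psi := fun s => phi (s + h) - phi s).
  destruct (MVT_gen psi (y - h) y (fun s => Derive phi (s + h) - Derive phi s)) as [c1 [Hc1 E1]].
  - intros s _. apply psi_der.
  - intros s _. apply cont_pt_of_ex. eexists. apply psi_der.
  - rewrite Rmin_left, Rmax_right in Hc1 by lra.
    destruct (MVT_gen (Derive phi) c1 (c1 + h) (Derive (Derive phi))) as [c2 [Hc2 E2]].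
    + intros; apply Derive_correct, d1.
    + intros; apply cont_pt_of_ex, d1.
    + rewrite Rmin_left, Rmax_right in Hc2 by lra.
      exists c2. split. apply Rabs_le; lra.
      unfold uxx. unfold psi in E1.
      replace (phi (y + h) - 2 * phi y + phi (y - h)) with ((phi (y + h) - phi y) - (phi (y - h + h) - phi (y - h))).
      2: { replace (y - h + h) with y by ring. ring. }
      rewrite E1. replace (Derive phi (c1 + h) - Derive phi c1) with (Derive (Derive phi) c2 * (c1 + h - c1)) by (rewrite E2; ring).
      field. lra.
Qed.
End Sm.

Lemma sgn_pos q : 0 < q -> sgn q = 1.
Proof. intros H. unfold sgn. destruct Rlt_dec; [reflexivity|lra]. Qed.
Lemma sgn_neg q : q < 0 -> sgn q = -1.
Proof. intros H. unfold sgn. destruct Rlt_dec; [lra|]. destruct Rlt_dec; [reflexivity|lra]. Qed.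

Lemma Rmin_mono a b c d : a <= c -> b <= d -> Rmin a b <= Rmin c d.
Proof. intros. unfold Rmin; repeat destruct Rle_dec; lra. Qed.
Lemma Rmax_mono a b c d : a <= c -> b <= d -> Rmax a b <= Rmax c d.
Proof. intros. unfold Rmax; repeat destruct Rle_dec; lra. Qed.

Lemma Adelta_plus_mono K L p q p' q' : 0 < K -> 0 < L -> p <= p' -> q <= q' ->
  Adelta_plus K L p q <= Adelta_plus K L p' q'.
Proof.
  intros HK HL Hp Hq. unfold Adelta_plus.
  assert (H1 : 0 <= pos p <= pos p') by (unfold pos, Rmax; repeat destruct Rle_dec; lra).
  assert (H2 : 0 <= pos q <= pos q') by (unfold pos, Rmax; repeat destruct Rle_dec; lra).
  set (P := pos p) in *. set (P' := pos p') in *. set (Q := pos q) in *. set (Q' := pos q') in *.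
  rewrite !Adelta_M.
  destruct (Req_dec Q 0) as [E|E].
  - rewrite E, sgn_0, Rmult_0_l. pose proof (M_bounds K L P' Q' HK HL).
    destruct (Req_dec Q' 0) as [E'|E']. rewrite E', sgn_0; lra. rewrite sgn_pos by lra. lra.
  - rewrite !sgn_pos by lra. rewrite !Rmult_1_l. unfold M.
    assert (Hc : 0 <= A P Q <= A P' Q').
    { unfold A. split. rewrite <- cbrt_0 at 1. apply cbrt_mono. nra. apply cbrt_mono.
      assert (P^2 <= P'^2) by nra. nra. }
    rewrite !Rabs_right by lra.
    apply Rmin_mono; [apply Rmin_mono|]; nra.
Qed.

Lemma Adelta_minus_mono K L p q p' q' : 0 < K -> 0 < L -> p <= p' -> q <= q' ->
  Adelta_minus K L p q <= Adelta_minus K L p' q'.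
Proof.
  intros HK HL Hp Hq. unfold Adelta_minus.
  assert (H1 : neg p <= neg p' <= 0) by (unfold neg, Rmin; repeat destruct Rle_dec; lra).
  assert (H2 : neg q <= neg q' <= 0) by (unfold neg, Rmin; repeat destruct Rle_dec; lra).
  set (P := neg p) in *. set (P' := neg p') in *. set (Q := neg q) in *. set (Q' := neg q') in *.
  rewrite !Adelta_M.
  destruct (Req_dec Q' 0) as [E|E].
  - rewrite E, sgn_0, Rmult_0_l. pose proof (M_bounds K L P Q HK HL).
    destruct (Req_dec Q 0) as [E'|E']. rewrite E', sgn_0; lra. rewrite sgn_neg by lra. lra.
  - rewrite !sgn_neg by lra. unfold M.
    assert (Hc : A P Q <= A P' Q' <= 0).
    { unfold A. split. apply cbrt_mono. assert (P'^2 <= P^2) by nra. nra.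
      rewrite <- cbrt_0. apply cbrt_mono. nra. }
    rewrite !Rabs_left1 by lra. 
    assert (Rmin (Rmin (- A P' Q') (K * - P')) (L * - Q') <= Rmin (Rmin (- A P Q) (K * - P)) (L * - Q)).
    { apply Rmin_mono; [apply Rmin_mono|]; nra. }
    lra.
Qed.

Lemma Adelta_even K L p q : Adelta K L (- p) q = Adelta K L p q.
Proof. unfold Adelta, A. replace ((- p) ^ 2) with (p ^ 2) by ring. rewrite Rabs_Ropp. reflexivity. Qed.

Lemma sgn_opp q : sgn (- q) = - sgn q.
Proof.
  destruct (Rtotal_order q 0) as [h|[h|h]].
  rewrite (sgn_pos (- q)), (sgn_neg q) by lra; ring. subst; rewrite Ropp_0, sgn_0; ring.
  rewrite (sgn_neg (- q)), (sgn_pos q) by lra; ring.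
Qed.

Lemma Adelta_odd K L p q : Adelta K L p (- q) = - Adelta K L p q.
Proof.
  unfold Adelta, A. replace (p ^ 2 * - q) with (- (p ^ 2 * q)) by ring.
  rewrite cbrt_opp, !Rabs_Ropp, sgn_opp. ring.
Qed.

Lemma Adelta_abs K L p q : Adelta K L (Rabs p) q = Adelta K L p q.
Proof. unfold Rabs; destruct Rcase_abs; [apply Adelta_even|reflexivity]. Qed.

Lemma final_id K L p q :
  Adelta_plus K L (Rmax (Rmax (- p) p) 0) (- q) + Adelta_minus K L (Rmin (Rmin (- p) p) 0) (- q)
  = - Adelta K L p q.
Proof.
  unfold Adelta_plus, Adelta_minus.
  replace (pos (Rmax (Rmax (- p) p) 0)) with (Rabs p) by (unfold pos, Rabs, Rmax; repeat destruct Rle_dec; repeat destruct Rcase_abs; lra).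
  replace (neg (Rmin (Rmin (- p) p) 0)) with (- Rabs p) by (unfold neg, Rabs, Rmin; repeat destruct Rle_dec; repeat destruct Rcase_abs; lra).
  rewrite Adelta_even, !Adelta_abs.
  destruct (Rtotal_order q 0) as [h|[h|h]].
  - replace (pos (- q)) with (- q) by (unfold pos, Rmax; destruct Rle_dec; lra).
    replace (neg (- q)) with 0 by (unfold neg, Rmin; destruct Rle_dec; lra).
    rewrite Adelta_q0, Adelta_odd. ring.
  - subst. replace (pos (- 0)) with 0 by (unfold pos, Rmax; destruct Rle_dec; lra).
    replace (neg (- 0)) with 0 by (unfold neg, Rmin; destruct Rle_dec; lra).
    rewrite !Adelta_q0. ring.
  - replace (neg (- q)) with (- q) by (unfold neg, Rmin; destruct Rle_dec; lra).
    replace (pos (- q)) with 0 by (unfold pos, Rmax; destruct Rle_dec; lra).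
    rewrite Adelta_q0, Adelta_odd. ring.
Qed.

Section El.
Variables (h x r : R) (v : R -> R).
Hypothesis Hh : 0 < h.
Let u := fun y => if Req_EM_T y x then r else r - v y.

Lemma u_x : u x = r.
Proof. unfold u. destruct Req_EM_T; congruence. Qed.
Lemma u_xp : u (x + h) = r - v (x + h).
Proof. unfold u. destruct Req_EM_T; [lra|reflexivity]. Qed.
Lemma u_xm : u (x - h) = r - v (x - h).
Proof. unfold u. destruct Req_EM_T; [lra|reflexivity]. Qed.

Lemma u_mDplus : mDplus h u x = v (x + h) / h.
Proof. unfold mDplus. rewrite u_x, u_xp. field. lra. Qed.
Lemma u_Dminus : Dminus h u x = v (x - h) / h.
Proof. unfold Dminus. rewrite u_x, u_xm. field. lra. Qed.
Lemma u_muxx : - uxx h u x = (v (x + h) + v (x - h)) / h ^ 2.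
Proof. unfold uxx. rewrite u_x, u_xp, u_xm. field. lra. Qed.

Lemma negFe_rv_eq K L : negFe_rv K L h x r v =
  Adelta_plus K L (Rmax (Rmax (v (x + h) / h) (v (x - h) / h)) 0) ((v (x + h) + v (x - h)) / h ^ 2)
  + Adelta_minus K L (Rmin (Rmin (v (x + h) / h) (v (x - h) / h)) 0) ((v (x + h) + v (x - h)) / h ^ 2).
Proof.
  unfold negFe_rv, negFe, abs_ux_plus, m_abs_ux_minus. fold u.
  rewrite u_mDplus, u_Dminus, u_muxx. reflexivity.
Qed.
End El.

Theorem mainTheorem7 (K L : R) (HK : 0 < K) (HL : 0 < L) :
  elliptic_scheme (negFe_rv K L)
  /\ consistent (negFe K L) (fun u x => - F1D K L u x).
Proof.
  split.
  - intros h x r s v w Hh Hrs Hvw.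
    rewrite !negFe_rv_eq by exact Hh.
    pose proof (Hvw 1%Z) as H1. pose proof (Hvw (-1)%Z) as H2.
    replace (x + IZR 1 * h) with (x + h) in H1 by (simpl; ring).
    replace (x + IZR (-1) * h) with (x - h) in H2 by (simpl; ring).
    assert (Ih : 0 < / h) by (apply Rinv_0_lt_compat; lra).
    assert (Ih2 : 0 < / h ^ 2) by (apply Rinv_0_lt_compat; nra).
    assert (A1 : v (x + h) / h <= w (x + h) / h) by (unfold Rdiv; nra).
    assert (A2 : v (x - h) / h <= w (x - h) / h) by (unfold Rdiv; nra).
    assert (A3 : (v (x + h) + v (x - h)) / h ^ 2 <= (w (x + h) + w (x - h)) / h ^ 2) by (unfold Rdiv; nra).
    apply Rplus_le_compat.
    + apply Adelta_plus_mono; auto. apply Rmax_mono; [apply Rmax_mono|]; lra.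
    + apply Adelta_minus_mono; auto. apply Rmin_mono; [apply Rmin_mono|]; lra.
  - intros phi x Hs. unfold negFe, F1D.
    rewrite <- final_id.
    assert (Lp := lim_mDplus phi Hs x). assert (Lm := lim_Dminus phi Hs x). assert (Lq := lim_muxx phi Hs x).
    eapply lim_lip2; [| | intros t; 
      match goal with |- Rabs (?a + ?b - (?c + ?d)) <= _ => 
        replace (a + b - (c + d)) with ((a - c) + (b - d)) by ring; apply Rabs_triang end].
    + unfold Adelta_plus. apply lim_Adelta; auto.
      * eapply lim_lip1; [|intros t; eapply Rle_trans; [apply Rabs_max_lip|]; rewrite Rminus_eq_0, Rabs_R0, Rplus_0_r; apply Rle_refl].
        unfold abs_ux_plus.
        eapply lim_lip1; [|intros t; eapply Rle_trans; [apply Rabs_max_lip|]; rewrite Rminus_eq_0, Rabs_R0, Rplus_0_r; apply Rle_refl].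
        eapply lim_lip2; [exact Lp | exact Lm | intros t; apply Rabs_max_lip].
      * eapply lim_lip1; [exact Lq|intros t; eapply Rle_trans; [apply Rabs_max_lip|]; rewrite Rminus_eq_0, Rabs_R0, Rplus_0_r; apply Rle_refl].
    + unfold Adelta_minus. apply lim_Adelta; auto.
      * eapply lim_lip1; [|intros t; eapply Rle_trans; [apply Rabs_min_lip|]; rewrite Rminus_eq_0, Rabs_R0, Rplus_0_r; apply Rle_refl].
        unfold m_abs_ux_minus.
        eapply lim_lip1; [|intros t; eapply Rle_trans; [apply Rabs_min_lip|]; rewrite Rminus_eq_0, Rabs_R0, Rplus_0_r; apply Rle_refl].
        eapply lim_lip2; [exact Lp | exact Lm | intros t; apply Rabs_min_lip].
      * eapply lim_lip1; [exact Lq|intros t; eapply Rle_trans; [apply Rabs_min_lip|]; rewrite Rminus_eq_0, Rabs_R0, Rplus_0_r; apply Rle_refl].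
Qed.
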